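(* In the Cucker–Smale setting below, assume $\sum_{p=0}^{\infty}\ln\left(\frac{e^{\tilde K(t_{2p+2}-t_{2p+1})}}{2-e^{\tilde K(t_{2p+2}-t_{2p+1})}}\right)<+\infty$. Then for all $t\ge0$, $$d_V(t)\le\bar M^0:=e^{\sum_{p=0}^{\infty}\ln\left(\frac{e^{\tilde K(t_{2p+2}-t_{2p+1})}}{2-e^{\tilde K(t_{2p+2}-t_{2p+1})}}\right)}d_V(0).$$
   Context: Setting: $N\ge2$; $\tilde\psi:\mathbb{R}\to\mathbb{R}$ positive, bounded, continuous, with $\tilde K:=\|\tilde\psi\|_\infty$ and $\int_0^\infty\min_{r\in[0,x]}\tilde\psi(r)dx=+\infty$; $\{t_n\}_{n\in\mathbb{N}_0}$ increasing, nonnegative, $t_0=0$, $t_n\to\infty$, with $t_{2n+2}-t_{2n+1}<\frac{\ln2}{\tilde K}$ and $t_{2n+1}-t_{2n}>\frac1{\tilde K}$ for all $n$; $\alpha(0)=1$, $\alpha=1$ on $(t_{2n},t_{2n+1})$, $\alpha=-1$ on $[t_{2n+1},t_{2n+2}]$. $\{(x_i,v_i)\}$ solves $x_i'=v_i$, $v_i'(t)=\frac1{N-1}\sum_{j\ne i}\alpha(t)\tilde\psi(|x_i(t)-x_j(t)|)(v_j(t)-v_i(t))$, $t>0$, $x_i(0)=x_i^0$, $v_i(0)=v_i^0\in\mathbb{R}^d$ (continuous, $C^1$ on each $(t_n,t_{n+1})$). $d_V(t):=\max_{i,j}|v_i(t)-v_j(t)|$. *)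

(* Defs.v *)
From Stdlib Require Import Reals.
From Coquelicot Require Import Coquelicot.
Open Scope R_scope.

Fixpoint fsum (n : nat) (f : nat -> R) : R :=
  match n with O => 0 | S m => fsum m f + f m end.

(* finite max of f 0, ..., f (n-1) (0 if n = 0; used only on nonneg values) *)
Fixpoint fmax (n : nat) (f : nat -> R) : R :=
  match n with O => 0 | S m => Rmax (fmax m f) (f m) end.

(* Euclidean norm of a vector of R^d, represented as nat -> R
   (coordinates 0..d-1) *)
Definition enorm (d : nat) (w : nat -> R) : R :=
  sqrt (fsum d (fun k => (w k) ^ 2)).

Definition vsub (a b : nat -> R) : nat -> R := fun k => a k - b k.

Definition sup_norm (psi : R -> R) : R :=
  real (Lub_Rbar (fun y => exists r, y = Rabs (psi r))).

Definition min_on (psi : R -> R) (x : R) : R :=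
  real (Glb_Rbar (fun y => exists r, 0 <= r <= x /\ y = psi r)).

Definition dV (N d : nat) (v : nat -> R -> nat -> R) (t : R) : R :=
  fmax N (fun i => fmax N (fun j => enorm d (vsub (v i t) (v j t)))).

Definition log_term (K : R) (tn : nat -> R) (p : nat) : R :=
  ln (exp (K * (tn (2*p+2)%nat - tn (2*p+1)%nat))
      / (2 - exp (K * (tn (2*p+2)%nat - tn (2*p+1)%nat)))).

(* Main.v *)
Require Import Defs.
From Stdlib Require Import Reals Lra Lia.
From Coquelicot Require Import Coquelicot.
Open Scope R_scope.

Lemma fsum_ext n f g : (forall k, (k < n)%nat -> f k = g k) -> fsum n f = fsum n g.
Proof. induction n; simpl; intros H; auto. rewrite IHn by (intros; apply H; lia). rewrite H by lia. auto. Qed.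

Lemma fsum_lin n f g1 g2 g3 a b c :
  (forall k, f k = a * g1 k + b * g2 k + c * g3 k) ->
  fsum n f = a * fsum n g1 + b * fsum n g2 + c * fsum n g3.
Proof. intros H; induction n; simpl. ring. rewrite IHn, H. ring. Qed.

Lemma fsum_le n f g : (forall k, (k < n)%nat -> f k <= g k) -> fsum n f <= fsum n g.
Proof. induction n; simpl; intros H. lra. assert (f n <= g n) by (apply H; lia).
 assert (fsum n f <= fsum n g) by (apply IHn; intros; apply H; lia). lra. Qed.

Lemma fsum_swap n m (f : nat -> nat -> R) :
  fsum n (fun k => fsum m (fun l => f k l)) = fsum m (fun l => fsum n (fun k => f k l)).
Proof. induction n; simpl. induction m; simpl; auto. rewrite <- IHm. ring.
 rewrite IHn. clear IHn. induction m; simpl. ring. rewrite <- IHm. ring. Qed.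

Lemma fsum_scal n c f : fsum n (fun k => c * f k) = c * fsum n f.
Proof. induction n; simpl. ring. rewrite IHn. ring. Qed.

Lemma fsum_nonneg n f : (forall k, (k < n)%nat -> 0 <= f k) -> 0 <= fsum n f.
Proof. intros H. apply Rle_trans with (fsum n (fun _ => 0)).
 right. induction n; simpl; auto. rewrite <- IHn. ring. intros; apply H; lia.
 apply fsum_le. auto. Qed.

Lemma fsum_count_aux n i f B : (n <= i)%nat -> (forall l, (l < n)%nat -> f l <= B) ->
  fsum n (fun l => if Nat.eqb l i then 0 else f l) <= INR n * B.
Proof. induction n; cbn [fsum]; intros Hi H. simpl; lra.
 destruct (Nat.eqb n i) eqn:E. apply Nat.eqb_eq in E. lia.
 rewrite S_INR. assert (f n <= B) by (apply H; lia).
 assert (fsum n (fun l => if Nat.eqb l i then 0 else f l) <= INR n * B) by (apply IHn; [lia| intros; apply H; lia]). lra. Qed.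

Lemma fsum_count n i f B : (i < n)%nat -> (forall l, (l < n)%nat -> l <> i -> f l <= B) ->
  fsum n (fun l => if Nat.eqb l i then 0 else f l) <= (INR n - 1) * B.
Proof. induction n; cbn [fsum]; intros Hi H. lia.
 destruct (Nat.eqb n i) eqn:E. apply Nat.eqb_eq in E. subst.
 rewrite S_INR. assert (fsum i (fun l => if Nat.eqb l i then 0 else f l) <= INR i * B).
 apply fsum_count_aux. lia. intros; apply H; lia. lra.
 apply Nat.eqb_neq in E. rewrite S_INR. assert (f n <= B) by (apply H; lia).
 assert (fsum n (fun l => if Nat.eqb l i then 0 else f l) <= (INR n - 1) * B) by (apply IHn; [lia| intros; apply H; lia]). lra. Qed.

Lemma fmax_ge0 n f : 0 <= fmax n f.
Proof. induction n; simpl. lra. apply Rle_trans with (fmax n f); auto. apply Rmax_l. Qed.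

Lemma fmax_ge n f i : (i < n)%nat -> f i <= fmax n f.
Proof. induction n; simpl; intros H. lia. destruct (Nat.eq_dec i n). subst. apply Rmax_r.
 apply Rle_trans with (fmax n f). apply IHn; lia. apply Rmax_l. Qed.

Lemma fmax_le n f C : 0 <= C -> (forall i, (i < n)%nat -> f i <= C) -> fmax n f <= C.
Proof. induction n; simpl; intros H0 H. auto. apply Rmax_lub. apply IHn; auto. apply H; lia. Qed.

Lemma fmax_scal n c f : 0 <= c -> fmax n (fun i => c * f i) = c * fmax n f.
Proof. intros Hc; induction n; simpl. ring. rewrite IHn. rewrite RmaxRmult; auto. Qed.

Lemma fmax_sqrt n f : fmax n (fun i => sqrt (f i)) = sqrt (fmax n f).
Proof. induction n; simpl. rewrite sqrt_0; auto. rewrite IHn.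
 unfold Rmax. destruct (Rle_dec (sqrt (fmax n f)) (sqrt (f n))); destruct (Rle_dec (fmax n f) (f n)); auto.
 apply Rle_antisym. apply sqrt_le_1_alt. lra. auto.
 exfalso; apply n0; apply sqrt_le_1_alt; lra. Qed.

Lemma fmax_ext n f g : (forall k, (k < n)%nat -> f k = g k) -> fmax n f = fmax n g.
Proof. induction n; simpl; intros H; auto. rewrite IHn by (intros; apply H; lia). rewrite H by lia. auto. Qed.


Lemma key (G : R -> R) a b : a <= b ->
  (forall s, a <= s <= b -> forall eta, 0 < eta -> exists delta, 0 < delta /\
     forall u, a <= u <= b -> Rabs (u - s) < delta -> Rabs (G u - G s) < eta) ->
  (forall s, a < s < b -> forall eta, 0 < eta -> exists delta, 0 < delta /\
     forall u, s < u < s + delta -> G u <= G s + eta * (u - s)) ->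
  forall t, a <= t <= b -> G t <= G a.
Proof.
  intros Hab HC HD.
  assert (Main : forall eps, 0 < eps -> forall t, a <= t <= b -> G t <= G a + eps * (1 + t - a)).
  { intros eps Heps.
    set (B := fun u => G a + eps * (1 + u - a)).
    set (E := fun t => a <= t <= b /\ forall u, a <= u <= t -> G u <= B u).
    assert (Ea : E a).
    { split. lra. intros u Hu. replace u with a by lra. unfold B. nra. }
    destruct (completeness E) as [s [Hub Hlub]].
    { exists b. intros t [Ht _]. lra. }
    { exists a. exact Ea. }
    assert (Has : a <= s) by (apply Hub; exact Ea).
    assert (Hsb : s <= b) by (apply Hlub; intros t [Ht _]; lra).
    assert (Hbelow : forall u, a <= u < s -> G u <= B u).
    { intros u Hu. destruct (Rle_dec (G u) (B u)) as [r|n]; auto. exfalso.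
      assert (Hu2 : is_upper_bound E u).
      { intros t [Ht Ht2]. destruct (Rle_dec t u) as [r|n2]; auto. exfalso. apply n. apply Ht2. lra. }
      specialize (Hlub u Hu2). lra. }
    assert (Hs : G s <= B s).
    { destruct (Req_dec s a) as [e|ne]. subst s. unfold B. nra.
      destruct (Rle_dec (G s) (B s)) as [r|n]; auto. exfalso.
      destruct (HC s (conj Has Hsb) (G s - B s)) as [d [Hd Hd2]]. lra.
      set (u := Rmax a (s - d/2)).
      assert (a <= u < s). { unfold u. unfold Rmax. destruct (Rle_dec a (s - d/2)); lra. }
      assert (Rabs (u - s) < d). { unfold u, Rmax. destruct (Rle_dec a (s - d/2)); apply Rabs_def1; lra. }
      specialize (Hd2 u ltac:(lra) H0). apply Rabs_def2 in Hd2.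
      specialize (Hbelow u H). unfold B in *. nra. }
    assert (Es : E s).
    { split. lra. intros u Hu. destruct (Req_dec u s). subst; auto. apply Hbelow. lra. }
    assert (Hsb2 : s = b).
    { destruct (Req_dec s b); auto. exfalso.
      assert (Hx : exists d, 0 < d /\ forall u, s < u < s + d -> u <= b -> G u <= B u).
      { destruct (Req_dec s a) as [e|ne].
        - subst s. destruct (HC a (conj (Rle_refl a) Hab) eps Heps) as [d [Hd Hd2]].
          exists d. split; auto. intros u Hu Hub2.
          assert (Rabs (u - a) < d) by (apply Rabs_def1; lra).
          specialize (Hd2 u ltac:(lra) H0). apply Rabs_def2 in Hd2. unfold B. nra.
        - destruct (HD s ltac:(lra) eps Heps) as [d [Hd Hd2]].
          exists d. split; auto. intros u Hu Hub2. specialize (Hd2 u Hu). unfold B in *. nra. }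
      destruct Hx as [d [Hd Hd2]].
      set (t' := Rmin b (s + d/2)).
      assert (s < t' <= b). { unfold t', Rmin. destruct (Rle_dec b (s + d/2)); lra. }
      assert (t' <= s + d/2). { unfold t', Rmin. destruct (Rle_dec b (s + d/2)); lra. }
      assert (E t'). { split. lra. intros u Hu. destruct (Rle_dec u s). apply Es. lra. apply Hd2; lra. }
      specialize (Hub t' H2). lra. }
    intros t Ht. subst s. apply Es. lra. }
  intros t Ht. destruct (Rle_dec (G t) (G a)) as [r|n]; auto. exfalso.
  specialize (Main ((G t - G a) / (2 * (1 + t - a)))).
  assert (0 < (G t - G a) / (2 * (1 + t - a))). { apply Rdiv_lt_0_compat; lra. }
  specialize (Main H t Ht).
  assert ((G t - G a) / (2 * (1 + t - a)) * (1 + t - a) = (G t - G a) / 2) by (field; lra).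
  lra.
Qed.

Lemma fl_plus F (FF : Filter F) (f g : R -> R) lf lg : filterlim f F (locally lf) -> filterlim g F (locally lg) -> filterlim (fun x => f x + g x) F (locally (lf+lg)).
intros. apply (filterlim_comp_2 f g Rplus H H0 (filterlim_plus lf lg)). Qed.
Lemma fl_mult F (FF : Filter F) (f g : R -> R) lf lg : filterlim f F (locally lf) -> filterlim g F (locally lg) -> filterlim (fun x => f x * g x) F (locally (lf*lg)).
intros. apply (filterlim_comp_2 f g Rmult H H0 (filterlim_mult lf lg)). Qed.
Lemma fl_minus F (FF : Filter F) (f g : R -> R) lf lg : filterlim f F (locally lf) -> filterlim g F (locally lg) -> filterlim (fun x => f x - g x) F (locally (lf-lg)).
intros. replace (lf - lg) with (lf + (-1) * lg) by ring.
apply filterlim_ext with (fun x => f x + (-1) * g x). intros; ring.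
apply fl_plus; auto. apply fl_mult; auto. apply filterlim_const. Qed.
Lemma ball_R (y eps: R) x : ball y eps x <-> Rabs (x - y) < eps.
unfold ball; simpl. unfold AbsRing_ball, abs, minus, plus, opp; simpl. tauto. Qed.


Definition cdom (D : R -> Prop) (f : R -> R) s := forall eta, 0 < eta -> exists delta, 0 < delta /\
  forall u, D u -> Rabs (u - s) < delta -> Rabs (f u - f s) < eta.

Lemma fl_cdom (D : R -> Prop) f s : filterlim f (within D (locally s)) (locally (f s)) -> cdom D f s.
Proof. intros H eta Heta. apply filterlim_locally with (eps := mkposreal eta Heta) in H.
 destruct H as [d Hd]. exists d. split. apply cond_pos. intros u Du Hu.
 apply ball_R. apply Hd. apply ball_R. auto. auto. Qed.

Lemma Rmax_close x y x' y' eta : Rabs (x - x') < eta -> Rabs (y - y') < eta -> Rabs (Rmax x y - Rmax x' y') < eta.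
Proof. intros H1 H2. apply Rabs_def2 in H1; apply Rabs_def2 in H2. unfold Rmax.
 destruct (Rle_dec x y); destruct (Rle_dec x' y'); apply Rabs_def1; lra. Qed.

Lemma cdom_fmax n D (f : nat -> R -> R) s : (forall i, (i < n)%nat -> cdom D (f i) s) ->
  cdom D (fun u => fmax n (fun i => f i u)) s.
Proof. induction n; intros H eta Heta; simpl.
 exists 1. split. lra. intros. rewrite Rminus_0_r, Rabs_R0. auto.
 destruct (IHn (fun i Hi => H i ltac:(lia)) eta Heta) as [d1 [Hd1 H1]].
 destruct (H n ltac:(lia) eta Heta) as [d2 [Hd2 H2]].
 exists (Rmin d1 d2). split. apply Rmin_pos; auto. intros u Du Hu.
 apply Rmax_close. apply H1; auto. apply Rlt_le_trans with (1 := Hu); apply Rmin_l.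
 apply H2; auto. apply Rlt_le_trans with (1 := Hu); apply Rmin_r. Qed.

Lemma fmax_ev n (f : nat -> R -> R) (C : R -> R) s : (forall u, s < u -> 0 <= C u) ->
  (forall i, (i < n)%nat -> exists d, 0 < d /\ forall u, s < u < s + d -> f i u <= C u) ->
  exists d, 0 < d /\ forall u, s < u < s + d -> fmax n (fun i => f i u) <= C u.
Proof. intros HC; induction n; intros H; simpl.
 exists 1. split. lra. intros u Hu. apply HC; lra.
 destruct IHn as [d1 [Hd1 H1]]. intros; apply H; lia.
 destruct (H n ltac:(lia)) as [d2 [Hd2 H2]].
 exists (Rmin d1 d2). split. apply Rmin_pos; auto. intros u Hu.
 assert (Rmin d1 d2 <= d1) by apply Rmin_l. assert (Rmin d1 d2 <= d2) by apply Rmin_r.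
 apply Rmax_lub. apply H1; lra. apply H2; lra. Qed.
Lemma der_g c s (q : R -> R) D : is_derive q s D -> is_derive (fun u => exp (-c*u) * q u) s ((-c * exp(-c*s)) * q s + exp (-c*s) * D).
Proof. intros. assert (He: is_derive (fun u => exp(-c*u)) s (-c * exp(-c*s))). auto_derive. auto. ring.
apply (is_derive_mult _ _ s _ _ He H). intros; apply Rmult_comm. Qed.

Lemma fl_expc (D : R -> Prop) c s : filterlim (fun u => exp (-c*u)) (within D (locally s)) (locally (exp (-c*s))).
Proof. apply (filterlim_comp _ _ _ (fun u => -c*u) exp _ (locally (-c*s))).
 apply fl_mult. apply within_filter, locally_filter. apply filterlim_const.
 apply (filterlim_filter_le_1 (F := locally s)). apply filter_le_within. apply filterlim_id.
 apply (continuity_pt_filterlim exp). apply derivable_continuous_pt. apply derivable_pt_exp. Qed.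

Lemma interval_bound N a b c (q : nat -> nat -> R -> R) :
  a < b -> 0 <= c ->
  (forall i j s, (i<N)%nat -> (j<N)%nat -> a <= s <= b ->
     filterlim (q i j) (within (fun u => a <= u <= b) (locally s)) (locally (q i j s))) ->
  (forall i j s, (i<N)%nat -> (j<N)%nat -> a < s < b -> exists D, is_derive (q i j) s D /\
     (q i j s = fmax N (fun i => fmax N (fun j => q i j s)) -> D <= c * fmax N (fun i => fmax N (fun j => q i j s)))) ->
  forall t, a <= t <= b -> fmax N (fun i => fmax N (fun j => q i j t)) <= exp (c*(t-a)) * fmax N (fun i => fmax N (fun j => q i j a)).
Proof.
  intros Hab Hc Hcont Hder.
  set (Q := fun s => fmax N (fun i => fmax N (fun j => q i j s))).
  set (g := fun i j u => exp (-c*u) * q i j u).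
  set (G := fun u => fmax N (fun i => fmax N (fun j => g i j u))).
  assert (HGQ : forall u, G u = exp (-c*u) * Q u).
  { intros u. unfold G, Q. rewrite <- fmax_scal by (left; apply exp_pos). apply fmax_ext. intros i _.
    rewrite <- fmax_scal by (left; apply exp_pos). reflexivity. }
  set (Dm := fun u => a <= u <= b).
  assert (Hgc : forall i j s, (i<N)%nat -> (j<N)%nat -> a <= s <= b -> cdom Dm (g i j) s).
  { intros i j s Hi Hj Hs. apply fl_cdom. unfold g. apply fl_mult. apply within_filter, locally_filter.
    apply fl_expc. apply Hcont; auto. }
  assert (HGc : forall s, a <= s <= b -> cdom Dm G s).
  { intros s Hs. unfold G. apply cdom_fmax. intros i Hi. apply cdom_fmax. intros j Hj. apply Hgc; auto. }
  assert (Hkey : forall t, a <= t <= b -> G t <= G a).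
  { apply key. lra. intros s Hs. apply HGc. auto.
    intros s Hs eta Heta.
    apply (fmax_ev N (fun i u => fmax N (fun j => g i j u)) (fun u => G s + eta * (u - s)) s).
    { intros u Hu. assert (0 <= G s) by apply fmax_ge0. nra. }
    intros i Hi.
    apply (fmax_ev N (fun j u => g i j u) (fun u => G s + eta * (u - s)) s).
    { intros u Hu. assert (0 <= G s) by apply fmax_ge0. nra. }
    intros j Hj.
    assert (Hle : g i j s <= G s).
    { unfold G. apply Rle_trans with (fmax N (fun j => g i j s)). apply (fmax_ge N (fun j => g i j s)); auto.
      apply (fmax_ge N (fun i => fmax N (fun j => g i j s))); auto. }
    destruct (Rlt_or_le (g i j s) (G s)) as [Hlt|Hge].
    - destruct (Hgc i j s Hi Hj ltac:(lra) (G s - g i j s) ltac:(lra)) as [d [Hd Hd2]].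
      exists (Rmin d (b - s)). split. apply Rmin_pos; lra. intros u Hu.
      assert (Rmin d (b - s) <= d) by apply Rmin_l. assert (Rmin d (b - s) <= b - s) by apply Rmin_r.
      assert (Rabs (g i j u - g i j s) < G s - g i j s). apply Hd2. unfold Dm; lra. apply Rabs_def1; lra.
      apply Rabs_def2 in H1. nra.
    - assert (Heq : g i j s = G s) by lra.
      assert (HqQ : q i j s = Q s).
      { rewrite HGQ in Heq. unfold g in Heq. apply Rmult_eq_reg_l in Heq. auto. apply Rgt_not_eq, exp_pos. }
      destruct (Hder i j s Hi Hj Hs) as [D [HD HDle]].
      specialize (HDle HqQ).
      pose proof (der_g c s (q i j) D HD) as Hg.
      apply is_derive_Reals in Hg.
      destruct (Hg eta Heta) as [d Hd].
      exists d. split. apply cond_pos. intros u Hu.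
      specialize (Hd (u - s) ltac:(lra) ltac:(apply Rabs_def1; lra)).
      replace (s + (u - s)) with u in Hd by ring.
      apply Rabs_def2 in Hd. destruct Hd as [Hd1 _].
      assert (Hneg : - c * exp (- c * s) * q i j s + exp (- c * s) * D <= 0).
      { rewrite HqQ. assert (0 < exp (-c*s)) by apply exp_pos.
        replace (- c * exp (- c * s) * Q s + exp (- c * s) * D) with (exp (-c*s) * (D - c * Q s)) by ring.
        assert (D - c * Q s <= 0) by (unfold Q; lra). nra. }
      assert (Hus : 0 < u - s) by lra.
      assert (Hdiv : (g i j u - g i j s) < eta * (u - s)).
      { unfold g. set (X := exp (- c * u) * q i j u - exp (- c * s) * q i j s) in *.
        assert (X / (u - s) < eta) by lra.
        apply Rmult_lt_compat_r with (r := u - s) in H; auto.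
        replace (X / (u - s) * (u - s)) with X in H by (field; lra). lra. }
      lra. }
  intros t Ht. specialize (Hkey t Ht). rewrite !HGQ in Hkey.
  assert (Hexp : exp (c * (t - a)) = exp (c*t) * exp (-c*a)).
  { rewrite <- exp_plus. f_equal. ring. }
  assert (Hinv : exp (c*t) * exp (-c*t) = 1). { rewrite <- exp_plus. replace (c*t + -c*t) with 0 by ring. apply exp_0. }
  assert (0 < exp (c*t)) by apply exp_pos.
  apply Rmult_le_compat_l with (r := exp (c*t)) in Hkey; [|lra].
  fold Q. rewrite Hexp. replace (exp (c * t) * (exp (- c * t) * Q t)) with ((exp (c*t) * exp (-c*t)) * Q t) in Hkey by ring.
  rewrite Hinv in Hkey. unfold Q in *. rewrite Rmult_assoc. lra.
Qed.

Section Ineq.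
Variables (N d : nat) (w : nat -> nat -> R) (p : nat -> nat -> R) (K al : R).
Definition qq i j := fsum d (fun k => (w i k - w j k)^2).
Definition QQ := fmax N (fun i => fmax N (fun j => qq i j)).
Definition FF m k := / (INR N - 1) * fsum N (fun l => if Nat.eqb l m then 0 else al * p m l * (w l k - w m k)).
Definition dot (a b : nat -> R) := fsum d (fun k => a k * b k).

Lemma qq_le i j : (i < N)%nat -> (j < N)%nat -> qq i j <= QQ.
Proof. intros. unfold QQ. apply Rle_trans with (fmax N (fun j => qq i j)).
 apply (fmax_ge N (fun j => qq i j)); auto. apply (fmax_ge N (fun i => fmax N (fun j => qq i j))); auto. Qed.

Lemma qq_ge0 i j : 0 <= qq i j.
Proof. apply fsum_nonneg. intros. apply pow2_ge_0. Qed.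

Lemma S_eq i j m : fsum d (fun k => (w i k - w j k) * FF m k) =
   / (INR N - 1) * fsum N (fun l => if Nat.eqb l m then 0 else al * p m l * dot (fun k => w i k - w j k) (fun k => w l k - w m k)).
Proof.
  unfold FF.
  rewrite (fsum_ext d _ (fun k => / (INR N - 1) * fsum N (fun l => (w i k - w j k) * (if Nat.eqb l m then 0 else al * p m l * (w l k - w m k))))).
  2:{ intros k _. rewrite (fsum_scal N (w i k - w j k)). ring. }
  rewrite fsum_scal, fsum_swap. f_equal. apply fsum_ext. intros l _. f_equal.
  destruct (Nat.eqb l m). rewrite (fsum_lin _ _ (fun _ => 0) (fun _ => 0) (fun _ => 0) 0 0 0). ring. intros; ring.
  unfold dot. rewrite (fsum_lin _ _ (fun k => (w i k - w j k) * (w l k - w m k)) (fun _ => 0) (fun _ => 0) (al * p m l) 0 0). ring. intros; ring.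
Qed.

Lemma dot_i i j l : 2 * dot (fun k => w i k - w j k) (fun k => w l k - w i k) = qq l j - qq l i - qq i j.
Proof. unfold dot, qq. rewrite <- fsum_scal.
 rewrite (fsum_lin _ _ (fun k => (w l k - w j k)^2) (fun k => (w l k - w i k)^2) (fun k => (w i k - w j k)^2) 1 (-1) (-1)). ring. intros; simpl; ring. Qed.

Lemma dot_j i j l : 2 * dot (fun k => w i k - w j k) (fun k => w l k - w j k) = qq i j + qq l j - qq i l.
Proof. unfold dot, qq. rewrite <- fsum_scal.
 rewrite (fsum_lin _ _ (fun k => (w i k - w j k)^2) (fun k => (w l k - w j k)^2) (fun k => (w i k - w l k)^2) 1 1 (-1)). ring. intros; simpl; ring. Qed.

Lemma fsum_if_neg n m f : fsum n (fun l => if Nat.eqb l m then 0 else - f l) = - fsum n (fun l => if Nat.eqb l m then 0 else f l).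
Proof. rewrite (fsum_lin _ _ (fun l => if Nat.eqb l m then 0 else f l) (fun _ => 0) (fun _ => 0) (-1) 0 0). ring.
 intros l. destruct (Nat.eqb l m); ring. Qed.

Hypothesis HN : (2 <= N)%nat.
Hypothesis Hp : forall m l, 0 < p m l <= K.

Lemma ineq i j : (i < N)%nat -> (j < N)%nat -> qq i j = QQ ->
  (al = 1 -> fsum d (fun k => 2 * (w i k - w j k) * (FF i k - FF j k)) <= 0) /\
  (al = -1 -> fsum d (fun k => 2 * (w i k - w j k) * (FF i k - FF j k)) <= 4 * K * QQ).
Proof.
  intros Hi Hj Hmax.
  assert (HN1 : 1 <= INR N - 1). { apply le_INR in HN. simpl in HN. lra. }
  rewrite (fsum_lin _ _ (fun k => (w i k - w j k) * FF i k) (fun k => (w i k - w j k) * FF j k) (fun _ => 0) 2 (-2) 0)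
    by (intros; ring).
  rewrite !S_eq.
  set (a := fun k => w i k - w j k).
  assert (Hdi : forall l, (l < N)%nat -> - QQ <= dot a (fun k => w l k - w i k) <= 0).
  { intros l Hl. pose proof (dot_i i j l). fold a in H.
    pose proof (qq_le l j Hl Hj). pose proof (qq_ge0 l j). pose proof (qq_ge0 l i). pose proof (qq_le l i Hl Hi). lra. }
  assert (Hdj : forall l, (l < N)%nat -> 0 <= dot a (fun k => w l k - w j k) <= QQ).
  { intros l Hl. pose proof (dot_j i j l). fold a in H.
    pose proof (qq_le l j Hl Hj). pose proof (qq_ge0 l j). pose proof (qq_ge0 i l). pose proof (qq_le i l Hi Hl). lra. }
  assert (HQ0 : 0 <= QQ) by apply fmax_ge0.
  assert (Hinv : 0 < / (INR N - 1)) by (apply Rinv_0_lt_compat; lra).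
  split; intros Hal; subst al.
  - assert (H1 : fsum N (fun l => if Nat.eqb l i then 0 else 1 * p i l * dot a (fun k => w l k - w i k)) <= (INR N - 1) * 0).
    { apply fsum_count; auto. intros l Hl _. specialize (Hdi l Hl). specialize (Hp i l). nra. }
    assert (H2 : fsum N (fun l => if Nat.eqb l j then 0 else - (1 * p j l * dot a (fun k => w l k - w j k))) <= (INR N - 1) * 0).
    { apply fsum_count; auto. intros l Hl _. specialize (Hdj l Hl). specialize (Hp j l). nra. }
    rewrite fsum_if_neg in H2. nra.
  - assert (H1 : fsum N (fun l => if Nat.eqb l i then 0 else -1 * p i l * dot a (fun k => w l k - w i k)) <= (INR N - 1) * (K * QQ)).
    { apply fsum_count; auto. intros l Hl _. specialize (Hdi l Hl). specialize (Hp i l). nra. }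
    assert (H2 : fsum N (fun l => if Nat.eqb l j then 0 else - (-1 * p j l * dot a (fun k => w l k - w j k))) <= (INR N - 1) * (K * QQ)).
    { apply fsum_count; auto. intros l Hl _. specialize (Hdj l Hl). specialize (Hp j l). nra. }
    rewrite fsum_if_neg in H2.
    set (X := fsum N _) in H1. set (Y := fsum N _) in H2.
    assert (/ (INR N - 1) * X <= K * QQ).
    { apply Rmult_le_reg_l with (INR N - 1). lra. rewrite <- Rmult_assoc, Rinv_r by lra. lra. }
    assert (- (/ (INR N - 1) * Y) <= K * QQ).
    { apply Rmult_le_reg_l with (INR N - 1). lra. replace ((INR N - 1) * - (/ (INR N - 1) * Y)) with (- ((INR N - 1) * / (INR N - 1)) * Y) by ring. rewrite Rinv_r by lra. lra. }
    fold X Y. lra.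
Qed.
End Ineq.

Lemma fl_fsum n (F : (R -> Prop) -> Prop) (FF : Filter F) (f : nat -> R -> R) s :
  (forall k, (k < n)%nat -> filterlim (f k) F (locally (f k s))) ->
  filterlim (fun t => fsum n (fun k => f k t)) F (locally (fsum n (fun k => f k s))).
Proof. induction n; intros H; simpl. apply filterlim_const.
 apply fl_plus; [exact FF| |]. apply IHn; intros; apply H; lia. apply H; lia. Qed.

Lemma der_fsum n (f : nat -> R -> R) df s :
  (forall k, (k < n)%nat -> is_derive (f k) s (df k)) ->
  is_derive (fun t => fsum n (fun k => f k t)) s (fsum n df).
Proof. induction n; intros H; simpl. apply (is_derive_const (K := R_AbsRing) (V := R_NormedModule) 0 s).
 apply (is_derive_plus (K := R_AbsRing) (V := R_NormedModule)). apply IHn; intros; apply H; lia. apply H; lia. Qed.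

Lemma within_mono (D1 D2 : R -> Prop) s : (forall x, D1 x -> D2 x) ->
  filter_le (within D1 (locally s)) (within D2 (locally s)).
Proof. intros H P HP. unfold within in *. apply filter_imp with (2 := HP). intros x Hx H1. apply Hx, H, H1. Qed.

Lemma sup_norm_ok psi : (exists M, forall r, Rabs (psi r) <= M) -> forall r, Rabs (psi r) <= sup_norm psi.
Proof. intros [M HM] r. unfold sup_norm.
 destruct (Lub_Rbar_correct (fun y => exists r, y = Rabs (psi r))) as [Hub Hl].
 assert (H1 : Rbar_le (Rabs (psi r)) (Lub_Rbar (fun y => exists r, y = Rabs (psi r)))) by (apply Hub; exists r; auto).
 assert (H2 : Rbar_le (Lub_Rbar (fun y => exists r, y = Rabs (psi r))) M).
 { apply Hl. intros y [r' ->]. simpl. auto. }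
 destruct (Lub_Rbar (fun y => exists r, y = Rabs (psi r))); simpl in *; try contradiction; auto. Qed.

Lemma der_sq (f g : R -> R) s df dg : is_derive f s df -> is_derive g s dg ->
  is_derive (fun r => (f r - g r)^2) s (2 * (f s - g s) * (df - dg)).
Proof. intros Hf Hg.
 pose proof (is_derive_minus (K := R_AbsRing) (V := R_NormedModule) f g s df dg Hf Hg) as Hm.
 pose proof (is_derive_pow _ 2 s _ Hm) as Hp. simpl in Hp.
 unfold minus, plus, opp in Hp; simpl in Hp.
 replace (2 * (f s - g s) * (df - dg)) with (INR 2 * (df + - dg) * ((f s + - g s) * 1)) by (simpl; ring).
 exact Hp. Qed.

Lemma fl_sq (F : (R -> Prop) -> Prop) (FF : Filter F) f l : filterlim f F (locally l) -> filterlim (fun x => f x ^ 2) F (locally (l ^ 2)).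
Proof. intros H. replace (l^2) with (l * l) by ring. apply filterlim_ext with (fun x => f x * f x). intros; ring.
 apply fl_mult; auto. Qed.

Lemma phase N d (psi : R -> R) (tn : nat -> R) (alpha : R -> R) (x v : nat -> R -> nat -> R) K n al c :
  (2 <= N)%nat -> (forall r, 0 < psi r <= K) ->
  0 <= tn n -> tn n < tn (S n) ->
  (forall s, tn n < s < tn (S n) -> alpha s = al) ->
  ((al = 1 /\ c = 0) \/ (al = -1 /\ c = 4 * K)) ->
  (forall i k s, (i < N)%nat -> (k < d)%nat -> 0 <= s ->
     filterlim (fun r => v i r k) (within (fun r => 0 <= r) (locally s))
       (locally (v i s k))) ->
  (forall i k s, (i < N)%nat -> (k < d)%nat -> tn n < s < tn (S n) ->
     is_derive (fun r => v i r k) s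
       (/ (INR N - 1) *
        fsum N (fun j => if Nat.eqb j i then 0 else
          alpha s * psi (enorm d (vsub (x i s) (x j s)))
            * (v j s k - v i s k)))) ->
  forall t, tn n <= t <= tn (S n) ->
    fmax N (fun i => fmax N (fun j => fsum d (fun k => (v i t k - v j t k)^2))) <=
    exp (c * (t - tn n)) * fmax N (fun i => fmax N (fun j => fsum d (fun k => (v i (tn n) k - v j (tn n) k)^2))).
Proof.
  intros HN Hpsi H0 Hlt Hal Hc Hcont Hder.
  assert (HK : 0 < K) by (destruct (Hpsi 0); lra).
  apply (interval_bound N (tn n) (tn (S n)) c (fun i j t => fsum d (fun k => (v i t k - v j t k)^2))); auto.
  - destruct Hc as [[_ ->]|[_ ->]]; lra.
  - intros i j s Hi Hj Hs. apply (fl_fsum d _ (within_filter _ _ _ (@filter_filter _ _ (locally_filter s))) (fun k t => (v i t k - v j t k)^2) s).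
    intros k Hk. apply fl_sq. apply within_filter, locally_filter.
    apply fl_minus. apply within_filter, locally_filter.
    + eapply filterlim_filter_le_1. 2: apply (Hcont i k s Hi Hk ltac:(lra)). apply within_mono. intros; lra.
    + eapply filterlim_filter_le_1. 2: apply (Hcont j k s Hj Hk ltac:(lra)). apply within_mono. intros; lra.
  - intros i j s Hi Hj Hs.
    eexists. split.
    + apply (der_fsum d (fun k t => (v i t k - v j t k)^2)). intros k Hk. apply der_sq; apply Hder; auto.
    + intros Hmax.
      destruct (ineq N d (fun l k => v l s k) (fun m l => psi (enorm d (vsub (x m s) (x l s)))) K (alpha s) HN
         (fun m l => Hpsi _) i j Hi Hj Hmax) as [H1 H2].
      destruct Hc as [[Ha ->]|[Ha ->]]; assert (Has : alpha s = al) by (apply Hal; auto); rewrite Ha in Has.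
      * eapply Rle_trans. apply (H1 Has). rewrite Rmult_0_l. lra.
      * eapply Rle_trans. apply (H2 Has). right. reflexivity.
Qed.

Lemma exp_mono x y : x <= y -> exp x <= exp y.
Proof. intros H. destruct (Rle_lt_or_eq_dec _ _ H). left; apply exp_increasing; auto. subst; lra. Qed.

Lemma log_term_ge K tau : 0 < K -> K * tau < ln 2 -> 2 * K * tau <= ln (exp (K * tau) / (2 - exp (K * tau))).
Proof. intros HK H. set (e := exp (K * tau)).
 assert (He : e < 2). { unfold e. rewrite <- (exp_ln 2) by lra. apply exp_increasing; auto. }
 assert (He0 : 0 < e) by apply exp_pos.
 assert (Hee : exp (2 * K * tau) = e * e). { unfold e. rewrite <- exp_plus. f_equal. ring. }
 rewrite <- (ln_exp (2 * K * tau)). apply ln_le. apply exp_pos. rewrite Hee.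
 apply Rmult_le_reg_r with (2 - e). lra. replace (e / (2 - e) * (2 - e)) with e by (field; lra).
 assert (0 <= e * (e - 1) ^ 2) by (apply Rmult_le_pos; [lra| apply pow2_ge_0]). nra. Qed.

Lemma Series_zero : Series (fun _ => 0) = 0.
Proof. rewrite (Series_ext _ (fun n => 0 * 1)) by (intros; ring). rewrite Series_scal_l. ring. Qed.

Lemma fsum_sum_f m f : fsum (S m) f = sum_f_R0 f m.
Proof. induction m. simpl. ring. change (fsum (S (S m)) f) with (fsum (S m) f + f (S m)). rewrite IHm. reflexivity. Qed.

Lemma partial_le_series f m : (forall n, 0 <= f n) -> ex_series f -> fsum (S m) f <= Series f.
Proof. intros Hf Hs. rewrite (Series_incr_n f (S m)) by (auto; lia). simpl pred. rewrite fsum_sum_f.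
 assert (0 <= Series (fun k => f (S m + k)%nat)).
 { rewrite <- Series_zero. apply Series_le. intros; split; auto. lra. apply (ex_series_incr_n f (S m)). auto. }
 lra. Qed.

Lemma find_interval (tn : nat -> R) t : (forall n, tn n < tn (S n)) -> tn 0%nat <= t ->
  forall n, t < tn n -> exists m, tn m <= t <= tn (S m).
Proof. intros Hinc H0. induction n; intros Ht. lra.
 destruct (Rlt_dec t (tn n)). auto. exists n. lra. Qed.

Theorem proposition7p11
  (N d : nat) (psi : R -> R) (tn : nat -> R) (alpha : R -> R)
  (x v : nat -> R -> nat -> R) :
  (2 <= N)%nat ->
  (* psi positive, bounded, continuous; K = ||psi||_oo *)
  (forall r, 0 < psi r) ->
  (exists M, forall r, Rabs (psi r) <= M) ->
  (forall r, continuous psi r) ->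
  is_lim (fun X => RInt (min_on psi) 0 X) p_infty p_infty ->
  (* the switching times *)
  tn 0%nat = 0 ->
  (forall n, 0 <= tn n) ->
  (forall n, tn n < tn (S n)) ->
  is_lim_seq tn p_infty ->
  (forall n, tn (2*n+2)%nat - tn (2*n+1)%nat < ln 2 / sup_norm psi) ->
  (forall n, tn (2*n+1)%nat - tn (2*n)%nat > 1 / sup_norm psi) ->
  (* the sign function alpha *)
  alpha 0 = 1 ->
  (forall n s, tn (2*n)%nat < s < tn (2*n+1)%nat -> alpha s = 1) ->
  (forall n s, tn (2*n+1)%nat <= s <= tn (2*n+2)%nat -> alpha s = -1) ->
  (* (x_i, v_i) continuous on [0, oo) *)
  (forall i k s, (i < N)%nat -> (k < d)%nat -> 0 <= s ->
     filterlim (fun r => x i r k) (within (fun r => 0 <= r) (locally s))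
       (locally (x i s k))) ->
  (forall i k s, (i < N)%nat -> (k < d)%nat -> 0 <= s ->
     filterlim (fun r => v i r k) (within (fun r => 0 <= r) (locally s))
       (locally (v i s k))) ->
  (* the Cucker-Smale system on each open interval (t_n, t_{n+1}) *)
  (forall n i k s, (i < N)%nat -> (k < d)%nat -> tn n < s < tn (S n) ->
     is_derive (fun r => x i r k) s (v i s k)) ->
  (forall n i k s, (i < N)%nat -> (k < d)%nat -> tn n < s < tn (S n) ->
     is_derive (fun r => v i r k) s
       (/ (INR N - 1) *
        fsum N (fun j => if Nat.eqb j i then 0 else
          alpha s * psi (enorm d (vsub (x i s) (x j s)))
            * (v j s k - v i s k)))) ->
  (* summability assumption *)
  ex_series (log_term (sup_norm psi) tn) ->
  forall s, 0 <= s ->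
    dV N d v s <= exp (Series (log_term (sup_norm psi) tn)) * dV N d v 0.
Proof.
  intros HN Hpos Hbnd Hpc Hint Ht0 Htpos Hinc Hlim Hneg Hposl Ha0 Ha1 Ha2 Hxc Hvc Hxd Hvd Hser s Hs.
  set (K := sup_norm psi).
  assert (Hpsi : forall r, 0 < psi r <= K).
  { intros r. split. auto. pose proof (sup_norm_ok psi Hbnd r) as H. rewrite Rabs_pos_eq in H by (left; auto). exact H. }
  assert (HK : 0 < K) by (destruct (Hpsi 0); lra).
  set (Qf := fun t => fmax N (fun i => fmax N (fun j => fsum d (fun k => (v i t k - v j t k)^2)))).
  assert (HdV : forall t, dV N d v t = sqrt (Qf t)).
  { intros t. unfold dV, Qf. rewrite <- fmax_sqrt. apply fmax_ext. intros i _. rewrite <- fmax_sqrt. reflexivity. }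
  assert (Hev : forall m t, tn (2*m)%nat <= t <= tn (2*m+1)%nat -> Qf t <= Qf (tn (2*m)%nat)).
  { intros m t Ht.
    assert (Heq : S (2*m) = (2*m+1)%nat) by lia.
    pose proof (phase N d psi tn alpha x v K (2*m) 1 0 HN Hpsi (Htpos _) (Hinc _)) as H.
    pose proof (Hvd (2*m)%nat) as Hv. rewrite Heq in H, Hv.
    specialize (H (fun s Hs => Ha1 m s Hs) (or_introl (conj eq_refl eq_refl)) Hvc Hv t Ht).
    rewrite Rmult_0_l, exp_0, Rmult_1_l in H. exact H. }
  assert (Hodd : forall m t, tn (2*m+1)%nat <= t <= tn (2*m+2)%nat ->
             Qf t <= exp (4 * K * (t - tn (2*m+1)%nat)) * Qf (tn (2*m+1)%nat)).
  { intros m t Ht.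
    assert (Heq : S (2*m+1) = (2*m+2)%nat) by lia.
    pose proof (phase N d psi tn alpha x v K (2*m+1) (-1) (4*K) HN Hpsi (Htpos _) (Hinc _)) as H.
    pose proof (Hvd (2*m+1)%nat) as Hv. rewrite Heq in H, Hv.
    specialize (H (fun s Hs => Ha2 m s (conj (Rlt_le _ _ (proj1 Hs)) (Rlt_le _ _ (proj2 Hs))))
      (or_intror (conj eq_refl eq_refl)) Hvc Hv t Ht).
    exact H. }
  set (tau := fun p => tn (2*p+2)%nat - tn (2*p+1)%nat).
  assert (Hmono : forall m, tn (2*m)%nat < tn (2*m+1)%nat /\ tn (2*m+1)%nat < tn (2*m+2)%nat).
  { intros m. split. replace (2*m+1)%nat with (S (2*m)) by lia. apply Hinc.
    replace (2*m+2)%nat with (S (2*m+1)) by lia. apply Hinc. }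
  assert (HQ0 : forall t, 0 <= Qf t) by (intros; apply fmax_ge0).
  assert (HA : forall m, Qf (tn (2*m)%nat) <= exp (4 * K * fsum m tau) * Qf 0).
  { induction m.
    - simpl. rewrite Ht0, Rmult_0_r, exp_0. lra.
    - replace (2 * S m)%nat with (2*m+2)%nat by lia.
      destruct (Hmono m) as [H1 H2].
      assert (Q1 := Hodd m (tn (2*m+2)%nat) ltac:(lra)).
      assert (Q2 := Hev m (tn (2*m+1)%nat) ltac:(lra)).
      change (fsum (S m) tau) with (fsum m tau + tau m).
      replace (4 * K * (fsum m tau + tau m)) with (4 * K * tau m + 4 * K * fsum m tau) by ring.
      rewrite exp_plus. fold (tau m) in Q1.
      assert (0 < exp (4 * K * tau m)) by apply exp_pos. nra. }
  assert (HB : exists m, Qf s <= exp (4 * K * fsum (S m) tau) * Qf 0).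
  { destruct (proj2 (is_lim_seq_spec tn p_infty) Hlim s) as [n0 Hn0].
    destruct (find_interval tn s Hinc ltac:(rewrite Ht0; lra) n0 (Hn0 n0 (Nat.le_refl _))) as [n [Hn1 Hn2]].
    destruct (Nat.Even_or_Odd n) as [[m Hm]|[m Hm]]; subst n; exists m.
    - destruct (Hmono m) as [H1 H2].
      replace (S (2*m)) with (2*m+1)%nat in Hn2 by lia.
      assert (Q1 := Hev m s ltac:(lra)). assert (Q2 := HA m).
      change (fsum (S m) tau) with (fsum m tau + tau m).
      assert (exp (4 * K * fsum m tau) <= exp (4 * K * (fsum m tau + tau m))).
      { apply exp_mono. unfold tau. nra. }
      specialize (HQ0 0). nra.
    - destruct (Hmono m) as [H1 H2].
      replace (S (2*m+1)) with (2*m+2)%nat in Hn2 by lia.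
      assert (Q1 := Hodd m s ltac:(lra)). assert (Q2 := HA m).
      assert (Q3 := Hev m (tn (2*m+1)%nat) ltac:(lra)).
      change (fsum (S m) tau) with (fsum m tau + tau m).
      assert (exp (4 * K * (s - tn (2 * m + 1)%nat)) <= exp (4 * K * tau m)).
      { apply exp_mono. unfold tau. nra. }
      replace (4 * K * (fsum m tau + tau m)) with (4 * K * tau m + 4 * K * fsum m tau) by ring.
      rewrite exp_plus.
      assert (0 < exp (4 * K * (s - tn (2 * m + 1)%nat))) by apply exp_pos.
      assert (0 < exp (4 * K * fsum m tau)) by apply exp_pos.
      specialize (HQ0 (tn (2*m+1)%nat)).
      eapply Rle_trans. exact Q1. eapply Rle_trans. apply Rmult_le_compat_r. exact HQ0. exact H.
      replace (exp (4 * K * tau m) * exp (4 * K * fsum m tau) * Qf 0) with (exp (4 * K * tau m) * (exp (4 * K * fsum m tau) * Qf 0)) by ring.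
      apply Rmult_le_compat_l. lra. lra. }
  destruct HB as [m Hm].
  rewrite !HdV.
  assert (Hterm : forall p, 2 * K * tau p <= log_term K tn p).
  { intros p. unfold log_term, tau. apply log_term_ge; auto.
    pose proof (Hneg p) as Hp. fold K in Hp.
    apply Rmult_lt_compat_l with (r := K) in Hp; auto.
    replace (K * (ln 2 / K)) with (ln 2) in Hp by (field; lra). exact Hp. }
  assert (Htau : forall p, 0 < tau p). { intros p. destruct (Hmono p). unfold tau. lra. }
  assert (HS : 2 * K * fsum (S m) tau <= Series (log_term K tn)).
  { rewrite <- fsum_scal. eapply Rle_trans. apply fsum_le. intros k _. apply Hterm.
    apply partial_le_series; auto. intros n. specialize (Hterm n). specialize (Htau n). nra. }
  assert (Hsq : sqrt (exp (4 * K * fsum (S m) tau)) = exp (2 * K * fsum (S m) tau)).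
  { replace (exp (4 * K * fsum (S m) tau)) with (exp (2 * K * fsum (S m) tau) ^ 2).
    apply sqrt_pow2. left; apply exp_pos. simpl. rewrite Rmult_1_r, <- exp_plus. f_equal. ring. }
  eapply Rle_trans. apply sqrt_le_1_alt. exact Hm.
  rewrite sqrt_mult_alt by (left; apply exp_pos). rewrite Hsq.
  apply Rmult_le_compat_r. apply sqrt_pos. apply exp_mono. exact HS.
Qed.
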